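(* For all integers $0\le a\le b$, $$\sum_{s=0}^{a}(-1)^sq^{s^2-s}\binom{2b-2s}{2a-2s}_q\binom{b}{s}_{q^2}=q^{2a^2-a}\frac{(q^{2b-4a+2};q^2)_{2a}}{(q;q)_{2a}}.$$
   Context: $(x;t)_m=\prod_{j=0}^{m-1}(1-xt^j)$ is the $q$-Pochhammer symbol and $\binom{c}{d}_t=\prod_{j=0}^{d-1}\frac{1-t^{c-j}}{1-t^{j+1}}$ the $q$-binomial coefficient; identities are of rational functions in $q$. *)

(* Defs.v *)
From HB Require Import structures.
From mathcomp Require Import all_boot all_order all_algebra.
From mathcomp Require Import fraction.
Set Implicit Arguments. Unset Strict Implicit. Unset Printing Implicit Defensive.
Import Order.TTheory GRing.Theory Num.Theory.
Local Open Scope ring_scope.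

Definition RF := {fraction {poly rat}}.

Definition qv : RF := tofrac ('X : {poly rat}).

Definition qpoch (x t : RF) (m : nat) : RF :=
  \prod_(j < m) (1 - x * t ^+ j).

(* q-binomial coefficient binom(c,d)_t = prod_{j=0}^{d-1} (1 - t^(c-j)) / (1 - t^(j+1)),
   with c - j an honest integer exponent. *)
Definition qbinom (t : RF) (c d : nat) : RF :=
  \prod_(j < d) ((1 - t ^ (c%:Z - j%:Z)) / (1 - t ^+ j.+1)).

(* Main.v *)
Require Import Defs.
From HB Require Import structures.
From mathcomp Require Import all_boot all_order all_algebra.
From mathcomp Require Import fraction.
From mathcomp Require Import ring lra zify.
Import Order.TTheory GRing.Theory Num.Theory.
Local Open Scope ring_scope.

Lemma qv_neq0 : qv != 0.
Proof. by rewrite /qv tofrac_eq0 polyX_eq0. Qed.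

Lemma qn1 (n : nat) : (0 < n)%N -> 1 - qv ^+ n != 0.
Proof.
move=> hn; rewrite /qv -tofracXn -tofrac1 -tofracB tofrac_eq0 subr_eq0.
apply/eqP => /(congr1 (fun p : {poly rat} => p`_n)).
by rewrite coefXn coef1 eqxx; case: n hn.
Qed.

Lemma qbinomL1 (t : RF) c d : qbinom t c d.+1 =
  qbinom t c d * ((1 - t ^ (c%:Z - d%:Z)) / (1 - t ^+ d.+1)).
Proof. by rewrite /qbinom big_ord_recr. Qed.

Lemma qbinom_div (t : RF) c d : qbinom t c d =
  (\prod_(j < d) (1 - t ^ (c%:Z - j%:Z))) / \prod_(j < d) (1 - t ^+ j.+1).
Proof. by rewrite /qbinom prodf_div. Qed.


Lemma qpochL3 (x t : RF) n : qpoch x t n.+1 = (1 - x) * qpoch (x * t) t n.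
Proof.
rewrite /qpoch big_ord_recl expr0 mulr1; congr (_ * _).
by apply: eq_bigr => j _; rewrite exprS mulrA.
Qed.

Lemma qpochL4 (x t : RF) n : qpoch x t n.+1 = qpoch x t n * (1 - x * t ^+ n).
Proof. by rewrite /qpoch big_ord_recr. Qed.

Lemma qbinomL2 (t : RF) c d : qbinom t c.+1 d.+1 =
  qbinom t c d * ((1 - t ^+ c.+1) / (1 - t ^+ d.+1)).
Proof.
rewrite !qbinom_div big_ord_recl big_ord_recr /= subr0.
rewrite (eq_bigr (fun j : 'I_d => 1 - t ^ (c%:Z - j%:Z))); last first.
  move=> j _; congr (_ - _ ^ _); rewrite /bump /= -addn1 !PoszD; ring.
rewrite !mulf_div; congr (_ / _); by rewrite mulrC.

Qed.
Definition Rr {F : fieldType} (q al Z X : F) : F :=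
  let D := (1 - q * Z) * (1 - q ^+ 2 * Z) in
  (1 - X) * (1 - q ^+ 3 * al * Z / X) *
  (- (1 - q * Z - q ^+ 2 * Z + q ^+ 3 * al * Z) / D
   + q * al * (q ^+ 2 * al - q ^+ 2 * Z) / D / X).

Lemma keyR (F : fieldType) (q al Z : F) : q != 0 -> al != 0 ->
  1 - q * Z != 0 -> 1 - q ^+ 2 * Z != 0 ->
  Rr q al Z (q ^+ 2 * al) + (1 - q * al) * (1 - q ^+ 2 * al) = 0.
Proof. move=> *; rewrite /Rr; field; repeat (apply/andP; split); rewrite ?mulf_neq0 ?expf_neq0 //. Qed.

Lemma keyS (F : fieldType) (q X Y Z P qb v w Bu : F) :
  q != 0 -> X != 0 -> Y != 0 ->
  1 - q * Z != 0 -> 1 - q ^+ 2 * Z != 0 ->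
  1 - q * Y != 0 -> 1 - q ^+ 2 * Y != 0 ->
  1 - q * Y * Z != 0 -> 1 - q ^+ 2 * Y * Z != 0 -> 1 - q ^+ 2 * X != 0 ->
  Bu = w * ((1 - q * Y * Z) / (1 - q * Y)) * ((1 - q ^+ 2 * Y * Z) / (1 - q ^+ 2 * Y)) ->
  Bu = v * ((1 - q ^+ 2 * Z) / (1 - q * Y)) * ((1 - q * Z) / (1 - q ^+ 2 * Y)) ->
  (1 - q * (X * Y)) * (1 - q ^+ 2 * (X * Y)) * (P * Bu * qb)
  - q * (X * Y) * (X * Y) * (1 - Z / (X * Y)) * (1 - q ^+ 2 * Z / (X * Y)) * (P * v * qb)
  = (- P * X * w * (qb * ((1 - q ^+ 2 * Y * Z) / (1 - q ^+ 2 * X)))) * Rr q (X * Y) Z (q ^+ 2 * X)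
    - (P * Bu * qb) * Rr q (X * Y) Z X.
Proof.
move=> q0 X0 Y0 h1 h2 h3 h4 h5 h6 h7 hw hv.
have ew : w = Bu / (((1 - q * Y * Z) / (1 - q * Y)) * ((1 - q ^+ 2 * Y * Z) / (1 - q ^+ 2 * Y))).
  by rewrite hw; field; repeat (apply/andP; split); rewrite ?mulf_neq0 ?expf_neq0 //.
have ev : v = Bu / (((1 - q ^+ 2 * Z) / (1 - q * Y)) * ((1 - q * Z) / (1 - q ^+ 2 * Y))).
  by rewrite hv; field; repeat (apply/andP; split); rewrite ?mulf_neq0 ?expf_neq0 //.
rewrite ew ev /Rr /=; field.
repeat (apply/andP; split); rewrite ?mulf_neq0 ?expf_neq0 //.
Qed.


Lemma keyRh (F : fieldType) (q al Z E Qx Qq : F) :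
  al != 0 -> Qq != 0 -> 1 - q * al != 0 -> 1 - q * (q * al) != 0 ->
  (1 - q * al) * (1 - q ^+ 2 * al) *
  (E * (q * al * al) * ((1 - Z / al) * ((1 - Z / al * q ^+ 2) * Qx)) /
   (Qq * (1 - q * al) * (1 - q * (q * al))))
  = q * al * al * (1 - Z / al) * (1 - q ^+ 2 * Z / al) * (E * Qx / Qq).
Proof.
move=> *; field; repeat (apply/andP; split); rewrite ?mulf_neq0 ?expf_neq0 //.
Qed.

Lemma mulr_helper (F : comRingType) (x y z w : F) : x * (y * z) * w = x * w * y * z.
Proof. ring. Qed.


Lemma qz (m n : nat) : qv ^ (m%:Z - n%:Z) = qv ^+ m / qv ^+ n.
Proof. by rewrite expfzDr ?qv_neq0 // -invr_expz. Qed.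

Lemma qpoch_neq0 n : qpoch qv qv n != 0.
Proof.
rewrite /qpoch prodf_seq_neq0; apply/allP => j _ /=.
by rewrite -exprS qn1.
Qed.

Definition Rh (b a : nat) : RF := qv ^+ (2 * a * a - a)
    * qpoch (qv ^ (2 * b%:Z - 4 * a%:Z + 2)) (qv ^+ 2) (2 * a)
    / qpoch qv qv (2 * a).

Lemma rh_step a k : let b := (a.+1 + k)%N in
  let al := qv ^+ (2 * a) in let Z := qv ^+ (2 * k) in
  (1 - qv * al) * (1 - qv ^+ 2 * al) * Rh b a.+1
  = qv * al * al * (1 - Z / al) * (1 - qv ^+ 2 * Z / al) * Rh b a.
Proof.
move=> b al Z; rewrite /Rh.
have e1 : 2 * b%:Z - 4 * (a.+1)%:Z + 2 = (2 * k)%:Z - (2 * a)%:Z by rewrite /b; lia.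
have e2 : 2 * b%:Z - 4 * a%:Z + 2 = (2 * k + 4)%:Z - (2 * a)%:Z by rewrite /b; lia.
rewrite e1 e2 !qz.
rewrite (_ : (2 * a.+1 * a.+1 - a.+1 = (2 * a * a - a) + (1 + 2 * a + 2 * a))%N); last by nia.
rewrite (_ : (2 * a.+1 = (2 * a).+2)%N); last by lia.
rewrite (qpochL4 qv qv (2 * a).+1) (qpochL4 qv qv (2 * a)).
rewrite (qpochL3 _ _ (2 * a).+1) (qpochL3 _ _ (2 * a)).
rewrite (_ : qv ^+ (2 * k + 4) / qv ^+ (2 * a) = qv ^+ (2 * k) / qv ^+ (2 * a) * qv ^+ 2 * qv ^+ 2); last first.
  by rewrite exprD (_ : 4 = 2 + 2)%N // exprD mulr_helper.
rewrite exprD (_ : qv ^+ (1 + 2 * a + 2 * a) = qv * al * al); last by rewrite exprD (exprD _ 1) expr1.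
rewrite (exprS qv (2 * a)) -/al -/Z.
apply: keyRh.
- by rewrite expf_neq0 ?qv_neq0.
- exact: qpoch_neq0.
- by rewrite /al -exprS qn1.
- by rewrite /al -exprS -exprS qn1.
Qed.

Definition Tm (b a s : nat) : RF :=
  (-1) ^+ s * qv ^+ (s * s - s) * qbinom qv (2 * b - 2 * s) (2 * a - 2 * s)
       * qbinom (qv ^+ 2) b s.

Lemma ls_term a k s : (s <= a)%N ->
  let b := (a.+1 + k)%N in let al := qv ^+ (2 * a) in let Z := qv ^+ (2 * k) in
  (1 - qv * al) * (1 - qv ^+ 2 * al) * Tm b a.+1 s
  - qv * al * al * (1 - Z / al) * (1 - qv ^+ 2 * Z / al) * Tm b a s
  = Tm b a.+1 s.+1 * Rr qv al Z (qv ^+ (2 * s.+1)) - Tm b a.+1 s * Rr qv al Z (qv ^+ (2 * s)).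
Proof.
move=> hs b al Z.
pose X := qv ^+ (2 * s). pose Y := qv ^+ (2 * a - 2 * s).
pose c := (2 * a - 2 * s + 2 * k)%N. pose d := (2 * a - 2 * s)%N.
have hal : al = X * Y by rewrite /al /X /Y -exprD; congr (_ ^+ _); lia.
have eX : qv ^+ (2 * s.+1) = qv ^+ 2 * X by rewrite /X -exprD; congr (_ ^+ _); lia.
pose P := (-1) ^+ s * qv ^+ (s * s - s) : RF.
pose qb := qbinom (qv ^+ 2) b s.
pose w := qbinom qv c d.
have hU1 : Tm b a.+1 s.+1 = - P * X * w * (qb * ((1 - qv ^+ 2 * Y * Z) / (1 - qv ^+ 2 * X))).
  rewrite /Tm qbinomL1.
  have -> : (2 * b - 2 * s.+1 = c)%N by rewrite /c /b; lia.
  have -> : (2 * a.+1 - 2 * s.+1 = d)%N by rewrite /d; lia.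
  have -> : b%:Z - s%:Z = (1 + (a - s) + k)%N%:Z :> int by rewrite /b; lia.
  rewrite -exprnP -!exprM (_ : (2 * (1 + (a - s) + k) = 2 + (2 * a - 2 * s) + 2 * k)%N); last by lia.
  rewrite (exprD qv (2 + (2 * a - 2 * s)) (2 * k)) (exprD qv 2 (2 * a - 2 * s)) -/Y -/Z.
  rewrite (_ : (2 * s.+1 = 2 + 2 * s)%N); last by lia.
  rewrite (exprD qv 2 (2 * s)) -/X -/w -/qb.
  rewrite (_ : (s.+1 * s.+1 - s.+1 = (s * s - s) + 2 * s)%N); last by nia.
  rewrite exprS exprD -/X /P.
  by rewrite mulN1r !mulNr !mulrA.
rewrite hU1 /Tm.
have -> : (2 * b - 2 * s = c.+2)%N by rewrite /c /b; lia.
have -> : (2 * a.+1 - 2 * s = d.+2)%N by rewrite /d; lia.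
rewrite -/d.
pose v := qbinom qv c.+2 d.
have ec1 : qv ^+ c.+1 = qv * Y * Z by rewrite exprS /c exprD mulrA.
have ec2 : qv ^+ c.+2 = qv ^+ 2 * Y * Z by rewrite -addn2 addnC exprD /c exprD mulrA.
have ed1 : qv ^+ d.+1 = qv * Y by rewrite exprS.
have ed2 : qv ^+ d.+2 = qv ^+ 2 * Y by rewrite -addn2 addnC exprD.
have hw : qbinom qv c.+2 d.+2 = w * ((1 - qv * Y * Z) / (1 - qv * Y)) * ((1 - qv ^+ 2 * Y * Z) / (1 - qv ^+ 2 * Y)).
  by rewrite qbinomL2 qbinomL2 -/w ec1 ec2 ed1 ed2.
have hv : qbinom qv c.+2 d.+2 = v * ((1 - qv ^+ 2 * Z) / (1 - qv * Y)) * ((1 - qv * Z) / (1 - qv ^+ 2 * Y)).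
  rewrite qbinomL1 qbinomL1 -/v ed1 ed2.
  have -> : (c.+2)%:Z - (d.+1)%:Z = (1 + 2 * k)%N%:Z :> int by rewrite /c /d; lia.
  have -> : (c.+2)%:Z - d%:Z = (2 + 2 * k)%N%:Z :> int by rewrite /c /d; lia.
  by rewrite -!exprnP (exprD qv 1 (2 * k)) (exprD qv 2 (2 * k)) expr1 -/Z.
rewrite -/P -/qb -/v (congr1 (Rr qv al Z) eX) hal.
apply: keyS.
all: try exact: hw; try exact: hv.
- exact: qv_neq0.
- by rewrite expf_neq0 ?qv_neq0.
- by rewrite expf_neq0 ?qv_neq0.
- by rewrite -exprS qn1.
- by rewrite -exprD qn1 //; lia.
- by rewrite -exprS qn1.
- by rewrite -exprD qn1 //; lia.
- by rewrite -ec1 qn1.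
- by rewrite -ec2 qn1.
- by rewrite -eX qn1 //; lia.
Qed.

Definition Ls (b a : nat) : RF := \sum_(0 <= s < a.+1) Tm b a s.

Lemma ls_step a k :
  let b := (a.+1 + k)%N in let al := qv ^+ (2 * a) in let Z := qv ^+ (2 * k) in
  (1 - qv * al) * (1 - qv ^+ 2 * al) * Ls b a.+1
  = qv * al * al * (1 - Z / al) * (1 - qv ^+ 2 * Z / al) * Ls b a.
Proof.
move=> b al Z.
pose c1 := (1 - qv * al) * (1 - qv ^+ 2 * al).
pose c0 := qv * al * al * (1 - Z / al) * (1 - qv ^+ 2 * Z / al).
pose G := fun s => Tm b a.+1 s * Rr qv al Z (qv ^+ (2 * s)).
have tel : \sum_(0 <= s < a.+1) (c1 * Tm b a.+1 s - c0 * Tm b a s) = G a.+1 - G 0%N.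
  apply: telescope_sumr_eq => // s /andP [_ hs].
  by rewrite /G /c1 /c0 ls_term.
have G0 : G 0%N = 0 by rewrite /G /Rr expr0 subrr !mul0r mulr0.
have Ga : G a.+1 + c1 * Tm b a.+1 a.+1 = 0.
  have eX : qv ^+ (2 * a.+1) = qv ^+ 2 * al by rewrite /al -exprD; congr (_ ^+ _); lia.
  rewrite /G (congr1 (Rr qv al Z) eX) (mulrC c1) -mulrDr /c1 keyR ?mulr0 //.
  - exact: qv_neq0.
  - by rewrite expf_neq0 ?qv_neq0.
  - by rewrite -exprS qn1.
  - by rewrite -exprD qn1 //; lia.
rewrite -/c1 -/c0 /Ls big_nat_recr //= mulrDr !mulr_sumr.
rewrite sumrB G0 subr0 in tel.
move/eqP: tel; rewrite subr_eq => /eqP ->.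
by rewrite addrC addrA (addrC _ (G a.+1)) Ga add0r.
Qed.

Lemma Ls0 b : Ls b 0 = 1.
Proof. by rewrite /Ls big_nat1 /Tm /qbinom !big_ord0 !mulr1 expr0. Qed.

Lemma Rh0 b : Rh b 0 = 1.
Proof. by rewrite /Rh /qpoch !big_ord0 expr0 mul1r invr1 mulr1. Qed.

Lemma main_ind b a : (a <= b)%N -> Ls b a = Rh b a.
Proof.
elim: a => [|a IH] hab; first by rewrite Ls0 Rh0.
have hk : b = (a.+1 + (b - a.+1))%N by lia.
have := ls_step a (b - a.+1); have := rh_step a (b - a.+1).
rewrite -hk /= IH; last by lia.
move=> hr hl; apply: (mulfI (x := (1 - qv * qv ^+ (2 * a)) * (1 - qv ^+ 2 * qv ^+ (2 * a)))).
  by rewrite mulf_neq0 // -?exprS -?exprD qn1 //; lia.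
by rewrite hl hr.
Qed.

Theorem mainTheorem9 (a b : nat) (hab : (a <= b)%N) :
  \sum_(0 <= s < a.+1)
     (-1) ^+ s * qv ^+ (s * s - s) * qbinom qv (2 * b - 2 * s) (2 * a - 2 * s)
       * qbinom (qv ^+ 2) b s
  = qv ^+ (2 * a * a - a)
    * qpoch (qv ^ (2 * b%:Z - 4 * a%:Z + 2)) (qv ^+ 2) (2 * a)
    / qpoch qv qv (2 * a).
Proof. exact: (main_ind b a hab).
Qed.
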